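(* Let $A\in\mathbb{R}^{m\times n}$ be semi-monotone, let $A=P_1-R_1+S_1$ be a double proper weak regular splitting and $A=P_2-R_2+S_2$ a double proper regular splitting of $A$. Suppose $N(R_2)\supseteq N(P_2)$, $R(R_2)\subseteq R(P_2)$, $-1\notin\sigma(R_2P_1^{\dagger})$ and $\widehat{\mathcal{A}}^{\dagger}\geq 0$, where $\widehat{\mathcal{A}}=(I+R_2P_1^{\dagger})A$. If $P_1^{\dagger}R_1\geq P_2^{\dagger}R_2$, $P_2^{\dagger}S_2\geq P_1^{\dagger}S_1$ and $P_2^{\dagger}R_2+P_2^{\dagger}S_2\leq 0$, then $\rho(\mathcal{W}_{12})\leq\rho(T_1)<1$, where $$\mathcal{W}_{12}=\begin{pmatrix} P_2^{\dagger}R_2P_1^{\dagger}R_1-P_2^{\dagger}S_2 & -P_2^{\dagger}R_2P_1^{\dagger}S_1\\ I & 0\end{pmatrix},\qquad T_1=\begin{pmatrix} P_1^{\dagger}R_1 & -P_1^{\dagger}S_1\\ I&0\end{pmatrix}.$$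
   Context: For $M\in\mathbb{R}^{m\times n}$, $M^{\dagger}$ is its Moore–Penrose inverse, $R(M)$, $N(M)$ its range and null space; inequalities are entrywise; $\rho$ is the spectral radius, $\sigma$ the spectrum. $A$ is semi-monotone if $A^{\dagger}\geq0$. A double splitting $A=P-R+S$ is a double proper splitting if $R(P)=R(A)$ and $N(P)=N(A)$; it is double proper regular if moreover $P^{\dagger}\geq0$, $R\geq0$, $S\leq0$; double proper weak regular if moreover $P^{\dagger}\geq 0$, $P^{\dagger}R\geq 0$, $P^{\dagger}S\leq 0$. *)

(* Defs.v *)
From HB Require Import structures.
From mathcomp Require Import all_boot all_order all_algebra.
From mathcomp Require Import reals complex.
Set Implicit Arguments. Unset Strict Implicit. Unset Printing Implicit Defensive.
Import Order.TTheory GRing.Theory Num.Theory.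
Local Open Scope ring_scope.

Section Defs.
Variable R : realType.

(* X is the Moore-Penrose inverse of M (the four Penrose equations);
   it exists and is unique, so "M^dagger" is faithfully a binder X with
   hypothesis is_mpinv M X. *)
Definition is_mpinv m n (M : 'M[R]_(m, n)) (X : 'M[R]_(n, m)) : Prop :=
  [/\ M *m X *m M = M, X *m M *m X = X,
      (M *m X)^T = M *m X & (X *m M)^T = X *m M].

Definition mx_le m n (M N : 'M[R]_(m, n)) : Prop := forall i j, M i j <= N i j.

Definition in_range m n (M : 'M[R]_(m, n)) (y : 'cV[R]_m) : Prop :=
  exists x : 'cV[R]_n, y = M *m x.
Definition in_null m n (M : 'M[R]_(m, n)) (x : 'cV[R]_n) : Prop :=
  M *m x = 0.

Definition cmx n (M : 'M[R]_n) : 'M[R[i]]_n := map_mx (fun x => x%:C%C) M.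

Definition in_spectrum n (M : 'M[R]_n) (z : R[i]) : Prop :=
  root (char_poly (cmx M)) z.

Definition eigenvalues n (M : 'M[R]_n) : seq R[i] :=
  sval (closed_field_poly_normal (char_poly (cmx M))).

Definition spectral_radius n (M : 'M[R]_n) : R :=
  \big[Num.max/0]_(z <- eigenvalues M) ComplexField.Normc.normc z.

End Defs.

(* Main.v *)
Require Import Defs.
From HB Require Import structures.
From mathcomp Require Import all_boot all_order all_algebra.
From mathcomp Require Import reals complex.
From mathcomp Require Import lra ring.
From mathcomp Require Import classical_sets boolp.
Import Order.TTheory GRing.Theory Num.Theory.
Local Open Scope ring_scope.
Set Implicit Arguments. Unset Strict Implicit. Unset Printing Implicit Defensive.

Section Aux.
Variable R : realType.
Implicit Types (m n p : nat).

Lemma mx_le_refl m n (M : 'M[R]_(m,n)) : mx_le M M.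
Proof. by move=> i j. Qed.

Lemma mx_le_trans m n (A B C : 'M[R]_(m,n)) : mx_le A B -> mx_le B C -> mx_le A C.
Proof. by move=> h1 h2 i j; apply: le_trans (h1 i j) (h2 i j). Qed.

Lemma mx_leD m n (A B C D : 'M[R]_(m,n)) : mx_le A B -> mx_le C D -> mx_le (A + C) (B + D).
Proof. by move=> h1 h2 i j; rewrite !mxE lerD. Qed.

Lemma mx_le_sub0 m n (A B : 'M[R]_(m,n)) : mx_le A B <-> mx_le 0 (B - A).
Proof.
split=> h i j; have := h i j; rewrite !mxE ?subr_ge0 //.
Qed.

Lemma mx_leN m n (A B : 'M[R]_(m,n)) : mx_le A B -> mx_le (- B) (- A).
Proof. by move=> h i j; rewrite !mxE lerN2. Qed.

Lemma mx_le_mull m n p (M : 'M[R]_(m,n)) (a b : 'M[R]_(n,p)) :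
  mx_le 0 M -> mx_le a b -> mx_le (M *m a) (M *m b).
Proof.
move=> hM hab i j; rewrite !mxE; apply: ler_sum => k _.
by apply: ler_wpM2l; [have := hM i k; rewrite mxE | exact: hab].
Qed.

Lemma mx_le_mulr m n p (M N : 'M[R]_(m,n)) (a : 'M[R]_(n,p)) :
  mx_le M N -> mx_le 0 a -> mx_le (M *m a) (N *m a).
Proof.
move=> hM ha i j; rewrite !mxE; apply: ler_sum => k _.
by apply: ler_wpM2r; [have := ha k j; rewrite mxE | exact: hM].
Qed.

Lemma mx_ge0_mul m n p (M : 'M[R]_(m,n)) (a : 'M[R]_(n,p)) :
  mx_le 0 M -> mx_le 0 a -> mx_le 0 (M *m a).
Proof. by move=> hM ha; rewrite -(mulmx0 _ M); exact: mx_le_mull. Qed.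

Lemma mx_le_scale m n (c : R) (a b : 'M[R]_(m,n)) :
  0 <= c -> mx_le a b -> mx_le (c *: a) (c *: b).
Proof. by move=> hc h i j; rewrite !mxE ler_wpM2l. Qed.

Lemma mx_le_scaler m n (c d : R) (a : 'M[R]_(m,n)) :
  c <= d -> mx_le 0 a -> mx_le (c *: a) (d *: a).
Proof. by move=> hc h i j; rewrite !mxE ler_wpM2r //; have := h i j; rewrite mxE. Qed.

Lemma mx_le_scalemx m n p (c : R) (M : 'M[R]_(m,n)) (a : 'M[R]_(n,p)) :
  M *m (c *: a) = c *: (M *m a).
Proof. by rewrite scalemxAr. Qed.

Lemma mx_ge0E m n (M : 'M[R]_(m,n)) i j : mx_le 0 M -> 0 <= M i j.
Proof. by move/(_ i j); rewrite mxE. Qed.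

Lemma mx_le0E m n (M : 'M[R]_(m,n)) i j : mx_le M 0 -> M i j <= 0.
Proof. by move/(_ i j); rewrite mxE. Qed.

End Aux.
Section Spec.
Variable R : realType.
Import ComplexField.
Local Open Scope complex_scope.

Lemma eig_col n (B : 'M[R]_n) (l : R[i]) : root (char_poly (cmx B)) l ->
  exists2 z : 'cV[R[i]]_n, z != 0 & cmx B *m z = l *: z.
Proof.
rewrite -eigenvalue_root_char => /eigenvalueP [v vA vnz].
have : \det (l%:M - cmx B) == 0.
  by apply/det0P; exists v => //; rewrite mulmxBr vA mul_mx_scalar subrr.
rewrite -det_tr => /det0P [w wnz wM].
exists w^T; first by apply: contra wnz => /eqP h; rewrite -[w]trmxK h trmx0.
have : (l%:M - cmx B) *m w^T = 0 by rewrite -[LHS]trmxK trmx_mul trmxK wM trmx0.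
by rewrite mulmxBl mul_scalar_mx => /eqP; rewrite subr_eq0 => /eqP <-.
Qed.

Lemma mem_eig n (B : 'M[R]_n) l : l \in eigenvalues B -> root (char_poly (cmx B)) l.
Proof.
rewrite /eigenvalues; case: (closed_field_poly_normal _) => r /= ->.
rewrite (monicP (char_poly_monic _)) scale1r.
by rewrite root_prod_XsubC.
Qed.

Lemma eig_mem n (B : 'M[R]_n) l : root (char_poly (cmx B)) l -> l \in eigenvalues B.
Proof.
rewrite /eigenvalues; case: (closed_field_poly_normal _) => r /= ->.
rewrite (monicP (char_poly_monic _)) scale1r.
by rewrite root_prod_XsubC.
Qed.

Lemma spec_le n (B : 'M[R]_n) (a : R) : 0 <= a ->
  (forall l (z : 'cV_n), z != 0 -> cmx B *m z = l *: z -> Normc.normc l <= a) ->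
  spectral_radius B <= a.
Proof.
move=> a0 H; rewrite /spectral_radius big_seq_cond; apply: bigmax_le => // l.
rewrite andbT => /mem_eig /eig_col [z zn hz]; exact: H hz.
Qed.

Lemma spec_radius_ge0 n (B : 'M[R]_n) : 0 <= spectral_radius B.
Proof. by rewrite /spectral_radius; apply: bigmax_ge_id. Qed.

Lemma spec_ge n (B : 'M[R]_n) (t : R) : 0 <= t ->
  (t%:M - B) \notin unitmx -> t <= spectral_radius B.
Proof.
move=> t0; rewrite unitmxE unitfE negbK => /det0P [v vn vB].
have : eigenvalue (cmx B) (t%:C).
  rewrite /cmx eigenvalue_map; apply/eigenvalueP; exists v => //.
  by move: vB; rewrite mulmxBr mul_mx_scalar => /eqP; rewrite subr_eq0 => /eqP.
rewrite eigenvalue_root_char => /eig_mem hm.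
rewrite /spectral_radius. apply: (@bigmax_sup_seq _ _ _ _ _ (t%:C)) => //.
rewrite /Normc.normc /= expr0n /= addr0 sqrtr_sqr ger0_norm //.
Qed.

Local Notation normc := (@Normc.normc R).

Lemma normc_ge0 (x : R[i]) : 0 <= normc x.
Proof. by case: x => a b; rewrite /Normc.normc sqrtr_ge0. Qed.

Lemma normcR (b : R) : normc b%:C = `|b|.
Proof. by rewrite /Normc.normc /= expr0n /= addr0 sqrtr_sqr. Qed.

Lemma normc_eq0 (x : R[i]) : (normc x == 0) = (x == 0).
Proof.
apply/eqP/eqP => [/Normc.eq0_normc //|->]; exact: Normc.normc0.
Qed.

Lemma normc_sum_le N (b : 'I_N -> R) (w : 'I_N -> R[i]) :
  normc (\sum_j (b j)%:C * w j) <= \sum_j `|b j| * normc (w j).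
Proof.
rewrite -lecR rmorph_sum /=.
have -> : (normc (\sum_j (b j)%:C * w j))%:C = `|\sum_j (b j)%:C * w j| by [].
apply: le_trans (ler_norm_sum _ _ _) _; apply: ler_sum => j _.
rewrite normrM rmorphM /=.
have -> : `|(b j)%:C| = (normc (b j)%:C)%:C by [].
by rewrite normcR.
Qed.


Lemma UB N K (B : 'M[R]_N) (v : 'cV[R]_N) (a : R) (D : 'M[R]_(N,K)) (F : 'M[R]_(K,N)) :
  mx_le 0 B -> mx_le 0 v -> 0 <= a -> mx_le (B *m v) (a *: v) ->
  B *m B = D *m F -> (forall i j, D i j != 0 -> 0 < v i 0) ->
  spectral_radius B <= a.
Proof.
move=> B0 v0 a0 Bv BDF Dv; apply: spec_le => // l z zn hz.
have [->|l0] := eqVneq l 0; first by rewrite Normc.normc0.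
have B0' : forall i j, 0 <= B i j by move=> i j; have := B0 i j; rewrite mxE.
have v0' : forall i, 0 <= v i 0 by move=> i; have := v0 i 0; rewrite mxE.
have supp : forall i, z i 0 != 0 -> 0 < v i 0.
  move=> i zi.
  have hz2 : z = l^-2 *: (map_mx (fun x => x%:C) D *m (map_mx (fun x => x%:C) F *m z)).
    rewrite mulmxA -map_mxM -BDF map_mxM -mulmxA -/(cmx B) hz.
    by rewrite -scalemxAr hz scalerA scalerA -mulrA -expr2 mulVf ?expf_neq0 // scale1r.
  case: (boolP [exists k, D i k != 0]) => [/existsP [k hk]|]; first exact: Dv hk.
  rewrite negb_exists => /forallP hD; move: zi; rewrite hz2 !mxE big1 ?mulr0 ?eqxx //.
  by move=> k _; have := hD k; rewrite negbK mxE => /eqP ->; rewrite mul0r.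
have [i0 zi0] : exists i0, z i0 0 != 0.
  case: (boolP [exists i, z i 0 != 0]) => [/existsP [i hi]|]; first by exists i.
  rewrite negb_exists => /forallP hz0; case/negP: zn; apply/eqP/matrixP => i j.
  by rewrite ord1 mxE; have := hz0 i; rewrite negbK => /eqP.
pose f i := normc (z i 0) / v i 0.
have f0 : forall i, true -> 0 <= f i by move=> i _; rewrite divr_ge0 ?normc_ge0.
have [im _ him] := @eq_bigmax _ _ _ 0 i0 predT f isT f0.
have fi0 : 0 < f i0 by rewrite divr_gt0 ?supp // lt_def normc_ge0 normc_eq0 zi0.
have fle : f i0 <= f im by rewrite -him; exact: (@le_bigmax _ _ _ 0 f i0).
have zim : z im 0 != 0.
  apply: contraTneq fle => hz0; rewrite /f hz0 Normc.normc0 mul0r -ltNge //.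
have vim := supp _ zim.
have bnd : forall j, normc (z j 0) <= f im * v j 0.
  move=> j; have [->|zj] := eqVneq (z j 0) 0.
    by rewrite Normc.normc0 mulr_ge0 // (le_trans (ltW fi0) fle).
  have vj := supp _ zj.
  have -> : normc (z j 0) = f j * v j 0 by rewrite /f divfK // gt_eqF.
  rewrite ler_pM2r //; rewrite -him; exact: (@le_bigmax _ _ _ 0 f j).
have key : normc l * normc (z im 0) <= a * normc (z im 0).
  rewrite -Normc.normcM.
  have -> : l * z im 0 = (cmx B *m z) im 0 by rewrite hz mxE.
  rewrite mxE.
  have -> : \sum_j cmx B im j * z j 0 = \sum_j (B im j)%:C * z j 0.
    by apply: eq_bigr => j _; rewrite mxE.
  apply: le_trans (normc_sum_le _ _) _.
  apply: (@le_trans _ _ (\sum_j B im j * (f im * v j 0))).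
    by apply: ler_sum => j _; rewrite ger0_norm // ler_wpM2l.
  have -> : \sum_j B im j * (f im * v j 0) = f im * (B *m v) im 0.
    by rewrite mxE mulr_sumr; apply: eq_bigr => j _; rewrite mulrCA.
  apply: (@le_trans _ _ (f im * (a * v im 0))).
    by rewrite ler_wpM2l ?(le_trans (ltW fi0) fle) //; have := Bv im 0; rewrite [X in _ <= X]mxE.
  by rewrite /f /= mulrCA divfK ?gt_eqF //.
by rewrite -(@ler_pM2r _ (normc (z im 0))) // lt_def normc_ge0 normc_eq0 zim.
Qed.

End Spec.
Section Res.
Variable R : realType.
Variable N : nat.
Variable B : 'M[R]_N.
Hypothesis B0 : mx_le 0 B.

Definition Pp (s : R) := exists v : 'cV[R]_N,
  (forall i, 0 < v i 0) /\ (forall i, (B *m v) i 0 < s * v i 0).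

Lemma B0' i j : 0 <= B i j.
Proof. by have := B0 i j; rewrite mxE. Qed.

Lemma Dx_entry s (x : 'cV[R]_N) k :
  ((s%:M - B) *m x) k 0 = s * x k 0 - (B *m x) k 0.
Proof. by rewrite mulmxBl mul_scalar_mx !mxE. Qed.

Lemma minP (s : R) (v x : 'cV[R]_N) : (forall i, 0 < v i 0) ->
  (forall i, (B *m v) i 0 < s * v i 0) ->
  (forall i, 0 <= ((s%:M - B) *m x) i 0) -> forall i, 0 <= x i 0.
Proof.
move=> vp Bv Dx i.
pose f k := x k 0 / v k 0.
case: (@arg_minP _ _ _ i predT f isT) => k _ hk.
have xk : forall j, f k * v j 0 <= x j 0.
  by move=> j; rewrite -ler_pdivlMr // hk.
suff fk : 0 <= f k.
  by apply: le_trans (xk i); rewrite mulr_ge0 // ltW.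
rewrite leNgt; apply/negP => fk.
have := Dx k; rewrite Dx_entry subr_ge0 leNgt => /negP; apply.
have h1 : f k * (B *m v) k 0 <= (B *m x) k 0.
  rewrite !mxE mulr_sumr; apply: ler_sum => j _.
  by rewrite mulrCA ler_wpM2l ?B0' ?xk.
apply: lt_le_trans h1.
have -> : s * x k 0 = f k * (s * v k 0) by rewrite /f mulrCA divfK // gt_eqF.
by rewrite ltr_nM2l.
Qed.

Lemma Pp_unit s : Pp s -> s%:M - B \in unitmx.
Proof.
case=> v [vp Bv]; rewrite unitmxE unitfE; apply/negP => /eqP hd.
have : \det (s%:M - B)^T == 0 by rewrite det_tr hd.
case/det0P => w wn wM.
have hx : (s%:M - B) *m w^T = 0 by rewrite -[LHS]trmxK trmx_mul trmxK wM trmx0.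
have h1 := minP vp Bv (x:=w^T). have h2 := minP vp Bv (x:=-w^T).
case/negP: wn; apply/eqP/matrixP => i j; rewrite ord1 mxE.
have a1 : 0 <= w^T j 0 by apply: h1 => k; rewrite hx mxE.
have a2 : 0 <= (- w^T) j 0 by apply: h2 => k; rewrite mulmxN hx oppr0 mxE.
move: a1 a2; rewrite !mxE oppr_ge0 => a1 a2; apply/eqP; rewrite eq_le a1 a2.
by [].
Qed.

Lemma Pp_inv_ge0 s : Pp s -> mx_le 0 (invmx (s%:M - B)).
Proof.
move=> hP; have U := Pp_unit hP; case: hP => v [vp Bv] i j.
have -> : invmx (s%:M - B) i j = (col j (invmx (s%:M - B))) i 0 by rewrite !mxE.
rewrite mxE; apply: (minP vp Bv) => k.
by rewrite colE mulmxA mulmxV // mul1mx mxE ler0n.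
Qed.

Lemma Pp_up s s' : Pp s -> s <= s' -> Pp s'.
Proof.
case=> v [vp Bv] ss; exists v; split => // i.
by apply: lt_le_trans (Bv i) _; rewrite ler_wpM2r // ltW.
Qed.


Lemma closure (s : R) : s%:M - B \in unitmx -> (forall d, 0 < d -> Pp (s + d)) ->
  mx_le 0 (invmx (s%:M - B)).
Proof.
move=> U hP i j.
set G := invmx (s%:M - B).
pose x := col j G.
have -> : G i j = x i 0 by rewrite !mxE.
rewrite mxE.
have hy : (s%:M - B) *m x = delta_mx j 0 by rewrite /x colE mulmxA mulmxV // mul1mx.
pose c := \sum_k \sum_l `|G k l|.
pose W := \sum_k `|x k 0|.
have c0 : 0 <= c by rewrite sumr_ge0 // => k _; rewrite sumr_ge0.
have W0 : 0 <= W by rewrite sumr_ge0.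
have xW : forall l, `|x l 0| <= W.
  by move=> l; rewrite /W (bigD1 l) //= lerDl sumr_ge0.
have rowc : forall k, \sum_l `|G k l| <= c.
  by move=> k; rewrite /c [leRHS](bigD1 k) //= lerDl sumr_ge0 // => k' _; rewrite sumr_ge0.
pose M := 2 * c * W.
have M0 : 0 <= M by rewrite /M !mulr_ge0.
have claim : forall d, 0 < d -> d * c <= 1/2 -> - (d * M) <= x i 0.
  move=> d d0 dc.
  have Pd := hP d d0.
  set Gd := invmx ((s + d)%:M - B).
  have Gd0 : mx_le 0 Gd := Pp_inv_ge0 Pd.
  have Ud := Pp_unit Pd.
  have eqD : (s + d)%:M - B = (s%:M - B) + d%:M by rewrite raddfD /= addrAC.
  pose ax := map_mx (fun r => `|r|) x.
  have ax0 : mx_le 0 ax by move=> k l; rewrite !mxE.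
  pose g := Gd *m ax.
  have g0 : forall k, 0 <= g k 0 by move=> k; exact: mx_ge0E (mx_ge0_mul Gd0 ax0).
  have hx1 : x = Gd *m (delta_mx j 0 + d *: x).
    have <- : ((s + d)%:M - B) *m x = delta_mx j 0 + d *: x.
      by rewrite eqD mulmxDl hy mul_scalar_mx.
    by rewrite mulKmx.
  have hx2 : x = Gd *m delta_mx j 0 + d *: (Gd *m x).
    by rewrite scalemxAr -mulmxDr -hx1.
  have step1m : mx_le (- (d *: g)) x.
    rewrite hx2 -[- (d *: g)]add0r -scalerN.
    apply: mx_leD.
      by apply: mx_ge0_mul => // k l; rewrite !mxE ler0n.
    apply: mx_le_scale; first exact: ltW.
    have hle : mx_le (- ax) x by move=> k l; rewrite !mxE lerNl -normrN ler_norm.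
    by have := mx_le_mull Gd0 hle; rewrite mulmxN.
  have step1 : - (d * g i 0) <= x i 0.
    by have := step1m i 0; rewrite mxE [X in - X <= _]mxE.
  have hg : g = G *m ax - d *: (G *m g).
    have h1 : ((s + d)%:M - B) *m g = ax by rewrite /g mulmxA mulmxV // mul1mx.
    have h2 : (s%:M - B) *m g = ax - d *: g.
      by rewrite -h1 eqD [in RHS]mulmxDl [d%:M *m _]mul_scalar_mx addrK.
    by rewrite scalemxAr -mulmxBr -h2 mulKmx.
  pose gm := \big[Num.max/0]_k g k 0.
  have gk : forall k, g k 0 <= c * W + d * (c * gm).
    move=> k; rewrite {1}hg.
    have a1 : (G *m ax) k 0 <= c * W.
      apply: le_trans (ler_norm _) _; rewrite mxE; apply: le_trans (ler_norm_sum _ _ _) _.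
      apply: (@le_trans _ _ (\sum_l `|G k l| * W)).
        by apply: ler_sum => l _; rewrite normrM mxE normr_id ler_wpM2l.
      by rewrite -mulr_suml ler_wpM2r.
    have a2 : - (d * (G *m g) k 0) <= d * (c * gm).
      rewrite -mulrN; apply: ler_wpM2l; first exact: ltW.
      apply: le_trans (ler_norm _) _; rewrite normrN mxE.
      apply: le_trans (ler_norm_sum _ _ _) _.
      apply: (@le_trans _ _ (\sum_l `|G k l| * gm)).
        apply: ler_sum => l _; rewrite normrM [`|g l 0|]ger0_norm ?g0 //; apply: ler_wpM2l => //.
        exact: (@le_bigmax _ _ _ 0 (fun k => g k 0) l).
      by rewrite -mulr_suml ler_wpM2r // bigmax_ge_id.
    have -> : (G *m ax - d *: (G *m g)) k 0 = (G *m ax) k 0 - d * (G *m g) k 0 by rewrite !mxE.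
    by apply: lerD.
  have gm0 : 0 <= gm by apply: bigmax_ge_id.
  have hgm : gm <= c * W + d * (c * gm).
    apply: bigmax_le => [|k _]; last exact: gk.
    by rewrite addr_ge0 ?mulr_ge0 // ltW.
  have hgm2 : gm <= M.
    have : d * (c * gm) <= 1/2 * gm by rewrite mulrA ler_wpM2r.
    rewrite /M; lra.
  have gi : g i 0 <= M.
    apply: le_trans hgm2; exact: (@le_bigmax _ _ _ 0 (fun k => g k 0) i).
  apply: le_trans step1; rewrite lerN2 ler_wpM2l // ltW //.
rewrite leNgt; apply/negP => xneg.
set xi := - x i 0.
have xi0 : 0 < xi by rewrite /xi oppr_gt0.
pose a := 1 / (2 * c + 1).
pose b := xi / (M + 1).
have a0 : 0 < a by rewrite /a divr_gt0 // ltr_wpDl // mulr_ge0.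
have b0 : 0 < b by rewrite /b divr_gt0 // ltr_wpDl.
have ea : a * (2 * c + 1) = 1 by rewrite /a mul1r mulVf // gt_eqF // ltr_wpDl // mulr_ge0.
have eb : b * (M + 1) = xi by rewrite /b divfK // gt_eqF // ltr_wpDl.
pose d := Num.min a b.
have da : d <= a by rewrite /d ge_min lexx.
have db : d <= b by rewrite /d ge_min lexx orbT.
have d0 : 0 < d by rewrite /d lt_min a0 b0.
have dc : d * c <= 1/2 by nra.
have := claim d d0 dc.
rewrite -/xi => h.
have h2 : d * M <= b * M by rewrite ler_wpM2r.
have eb' : b * M + b = xi by rewrite -eb mulrDr mulr1.
have h3 : xi <= d * M by rewrite /xi lerNl.
have h4 : b * M < xi by rewrite -eb' ltrDl.
by move: (le_lt_trans (le_trans h3 h2) h4); rewrite ltxx.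
Qed.


Lemma Pp_big : exists s, Pp s.
Proof.
exists (1 + \sum_i \sum_j B i j); exists (const_mx 1); split => [i|i]; first by rewrite mxE.
rewrite mxE [const_mx 1 i 0]mxE mulr1.
apply: (@le_lt_trans _ _ (\sum_i \sum_j B i j)); last by rewrite ltrDr.
apply: (@le_trans _ _ (\sum_j B i j)).
  by apply: ler_sum => j _; rewrite mxE mulr1.
rewrite [leRHS](bigD1 i) //= lerDl sumr_ge0 // => k _.
by rewrite sumr_ge0 // => l _; exact: B0'.
Qed.

Lemma resolvent_pos (t : R) : (forall s, t <= s -> s%:M - B \in unitmx) -> Pp t.
Proof.
move=> H; apply: contrapT => nPt.
pose S : set R := fun s => Pp s.
have lb : forall s, S s -> t <= s.
  move=> s Ss; rewrite leNgt; apply/negP => st; apply: nPt.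
  exact: Pp_up Ss (ltW st).
have [s0 Ps0] := Pp_big.
have neS : nonempty S by exists s0.
have lbS : lbound S t by move=> s Ss; exact: lb.
have hiS : has_inf S by split => //; exists t.
set ti := inf S.
have tti : t <= ti by apply: lb_le_inf.
have Hd : forall d, 0 < d -> Pp (ti + d).
  move=> d d0; have [e Se elt] := inf_adherent d0 hiS.
  exact: Pp_up Se (ltW elt).
have U := H ti tti.
have G0 := closure U Hd.
set G := invmx (ti%:M - B) in G0.
pose v : 'cV[R]_N := G *m const_mx 1.
have vpos : forall i, 0 < v i 0.
  move=> i.
  have : (G *m (ti%:M - B)) i i = 1 by rewrite mulVmx // mxE eqxx.
  rewrite mxE => hs.
  have [k hk] : exists k, G i k != 0.
    case: (boolP [exists k, G i k != 0]) => [/existsP [k hk]|]; first by exists k.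
    rewrite negb_exists => /forallP hG; move: hs; rewrite big1 => [/eqP|k _].
      by rewrite eq_sym oner_eq0.
    by have := hG k; rewrite negbK => /eqP ->; rewrite mul0r.
  rewrite /v mxE (bigD1 k) //= mxE mulr1.
  apply: (@lt_le_trans _ _ (G i k)).
    by rewrite lt_def hk; exact: mx_ge0E G0.
  rewrite lerDl sumr_ge0 // => l _; rewrite mxE mulr1; exact: mx_ge0E G0.
have hv : (ti%:M - B) *m v = const_mx 1 by rewrite /v mulmxA mulmxV // mul1mx.
have Bv : forall i, (B *m v) i 0 = ti * v i 0 - 1.
  move=> i; have := congr1 (fun M : 'cV[R]_N => M i 0) hv; rewrite /= Dx_entry [const_mx _ _ _]mxE => h.
  by rewrite -h opprB addrC subrK.
pose sv := \sum_i v i 0.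
have sv0 : 0 <= sv by rewrite sumr_ge0 // => i _; exact: ltW.
pose eps := 1 / (1 + sv).
have e0 : 0 < eps by rewrite divr_gt0 // ltr_wpDr.
have ev : forall i, eps * v i 0 < 1.
  move=> i; rewrite /eps mul1r mulrC ltr_pdivrMr ?mul1r; last by rewrite ltr_wpDr.
  apply: (@le_lt_trans _ _ sv); last by rewrite ltrDr.
  by rewrite /sv (bigD1 i) //= lerDl sumr_ge0 // => j _; exact: ltW.
have Pe : Pp (ti - eps).
  exists v; split => // i; rewrite Bv mulrBl ltrD2l ltrN2; exact: ev.
have h := ge_inf (ex_intro _ t lbS) Pe.
have h2 : ti - eps < ti by rewrite ltrBlDr ltrDl.
by move: (le_lt_trans h h2); rewrite ltxx.
Qed.

End Res.

Section MP.
Variable R : realType.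

Lemma cV_ext m n (M : 'M[R]_(m,n)) : (forall x : 'cV[R]_n, M *m x = 0) -> M = 0.
Proof.
move=> h; apply/matrixP => i j.
have := congr1 (fun Z : 'cV[R]_m => Z i 0) (h (delta_mx j 0)).
by rewrite -colE !mxE.
Qed.

Lemma mp_ids m n (A P : 'M[R]_(m,n)) Ad Pd : is_mpinv A Ad -> is_mpinv P Pd ->
  (forall y, in_range P y <-> in_range A y) -> (forall x, in_null P x <-> in_null A x) ->
  [/\ P *m Ad *m A = P, A *m Pd *m P = A, A *m Ad *m P = P & P *m Pd *m A = A].
Proof.
case=> [A1 A2 A3 A4] [P1 P2 P3 P4] hr hn; split.
- apply/eqP; rewrite eq_sym -subr_eq0; apply/eqP/cV_ext => x.
  rewrite -[P *m Ad *m A]mulmxA -{1}(mulmx1 P) -mulmxBr -mulmxA.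
  apply/(proj2 (hn _)); rewrite /in_null mulmxA mulmxBr mulmx1 mulmxA A1 subrr mul0mx //.
- apply/eqP; rewrite eq_sym -subr_eq0; apply/eqP/cV_ext => x.
  rewrite -[A *m Pd *m P]mulmxA -{1}(mulmx1 A) -mulmxBr -mulmxA.
  apply/(proj1 (hn _)); rewrite /in_null mulmxA mulmxBr mulmx1 mulmxA P1 subrr mul0mx //.
- apply/eqP; rewrite -subr_eq0; apply/eqP/cV_ext => x.
  have [w hw] : in_range A (P *m x) by apply/hr; exists x.
  by rewrite mulmxBl -!mulmxA hw !mulmxA A1 subrr.
- apply/eqP; rewrite -subr_eq0; apply/eqP/cV_ext => x.
  have [w hw] : in_range P (A *m x) by apply/hr; exists x.
  by rewrite mulmxBl -!mulmxA hw !mulmxA P1 subrr.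
Qed.


Lemma mp_derived m n (A P : 'M[R]_(m,n)) Ad Pd : is_mpinv A Ad -> is_mpinv P Pd ->
  [/\ P *m Ad *m A = P, A *m Pd *m P = A, A *m Ad *m P = P & P *m Pd *m A = A] ->
  [/\ Ad = Pd *m (P *m A^T *m Ad^T *m Ad), Pd = Ad *m (A *m P^T *m Pd^T *m Pd),
      Pd *m P *m Ad = Ad & Pd *m A *m Ad = Pd].
Proof.
case=> [A1 A2 A3 A4] [P1 P2 P3 P4] [I1 I2 I3 I4].
have e1 : Ad = A^T *m Ad^T *m Ad by rewrite -trmx_mul A4 A2.
have e2 : A^T = Pd *m P *m A^T.
  by rewrite -{1}I2 !trmx_mul mulmxA -trmx_mul P4.
have f1 : Pd = P^T *m Pd^T *m Pd by rewrite -trmx_mul P4 P2.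
have f2 : P^T = Ad *m A *m P^T.
  by rewrite -{1}I1 !trmx_mul mulmxA -trmx_mul A4.
have ea : Ad = Pd *m (P *m A^T *m Ad^T *m Ad) by rewrite {1}e1 {1}e2 !mulmxA.
have eb : Pd = Ad *m (A *m P^T *m Pd^T *m Pd) by rewrite {1}f1 {1}f2 !mulmxA.
have h1 : A *m Ad = P *m Pd *m (A *m Ad) by rewrite mulmxA I4.
have h2 : P *m Pd = A *m Ad *m (P *m Pd) by rewrite mulmxA I3.
have h3 : P *m Pd = P *m Pd *m (A *m Ad).
  transitivity (P *m Pd)^T; first by rewrite P3.
  by rewrite {1}h2 trmx_mul A3 P3.
have hd : A *m Ad = P *m Pd by rewrite h1 -h3.
split => //.
- by rewrite {1}ea mulmxA P2 -ea.
- by rewrite -mulmxA hd mulmxA P2.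
Qed.


Lemma entry_pos m p q (Nn : 'M[R]_(m,p)) (K : 'M[R]_(p,q)) i j :
  mx_le 0 Nn -> (Nn *m K) i j != 0 -> 0 < (Nn *m (const_mx 1 : 'cV[R]_p)) i 0.
Proof.
move=> N0 hij.
have [k hk] : exists k, Nn i k != 0.
  case: (boolP [exists k, Nn i k != 0]) => [/existsP [k hk]|]; first by exists k.
  rewrite negb_exists => /forallP hN; move: hij; rewrite mxE big1 ?eqxx // => k _.
  by have := hN k; rewrite negbK => /eqP ->; rewrite mul0r.
rewrite mxE (bigD1 k) //= mxE mulr1.
apply: (@lt_le_trans _ _ (Nn i k)); first by rewrite lt_def hk mx_ge0E.
rewrite lerDl sumr_ge0 // => l _; rewrite mxE mulr1 mx_ge0E //.
Qed.

Lemma sum_pos_entry m n (M : 'M[R]_(m,n)) i : 0 < (M *m (const_mx 1 : 'cV[R]_n)) i 0 -> exists j, M i j != 0.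
Proof.
case: (boolP [exists j, M i j != 0]) => [/existsP [j hj]|]; first by exists j.
rewrite negb_exists => /forallP hM; rewrite mxE big1 ?ltxx // => j _.
by have := hM j; rewrite negbK => /eqP ->; rewrite mul0r.
Qed.

Lemma mx_le_col m1 m2 n (a c : 'M[R]_(m1,n)) (b d : 'M[R]_(m2,n)) :
  mx_le a c -> mx_le b d -> mx_le (col_mx a b) (col_mx c d).
Proof.
move=> h1 h2 i j; case: (split_ordP i) => k ->; rewrite ?col_mxEu ?col_mxEd; [exact: h1|exact: h2].
Qed.

Lemma mx_le_colE m1 m2 n (a c : 'M[R]_(m1,n)) (b d : 'M[R]_(m2,n)) :
  mx_le (col_mx a b) (col_mx c d) -> mx_le a c /\ mx_le b d.
Proof.
move=> h; split => i j.
  by have := h (lshift _ i) j; rewrite !col_mxEu.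
by have := h (rshift _ i) j; rewrite !col_mxEd.
Qed.

Lemma mx_ge0_col m1 m2 n (a : 'M[R]_(m1,n)) (b : 'M[R]_(m2,n)) :
  mx_le 0 a -> mx_le 0 b -> mx_le 0 (col_mx a b).
Proof. by move=> h1 h2; rewrite -col_mx0; exact: mx_le_col. Qed.

Lemma mx_ge0_block m1 m2 n1 n2 (a : 'M[R]_(m1,n1)) (b : 'M[R]_(m1,n2))
  (c : 'M[R]_(m2,n1)) (d : 'M[R]_(m2,n2)) :
  mx_le 0 a -> mx_le 0 b -> mx_le 0 c -> mx_le 0 d -> mx_le 0 (block_mx a b c d).
Proof.
move=> ha hb hc hd i j; rewrite [X in X <= _]mxE.
case: (split_ordP i) => k ->; case: (split_ordP j) => l ->;
  rewrite ?block_mxEul ?block_mxEur ?block_mxEdl ?block_mxEdr mx_ge0E //.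
Qed.

Lemma mx_ge0_1 n : mx_le 0 (1%:M : 'M[R]_n).
Proof. by move=> i j; rewrite !mxE ler0n. Qed.

Lemma mx_ge0_N m n (M : 'M[R]_(m,n)) : mx_le M 0 -> mx_le 0 (- M).
Proof. by move=> h i j; rewrite !mxE oppr_ge0 mx_le0E. Qed.

Lemma T1_step n (X Y : 'M[R]_n) (u w : 'cV[R]_n) (c a b : R) :
  mx_le 0 X -> mx_le Y 0 -> mx_le 0 u -> X *m u - Y *m u = u - w ->
  (forall i, u i 0 - w i 0 <= c * u i 0) -> c <= a * a -> 0 < a -> a * b = 1 -> a <= 1 ->
  mx_le (X *m u + (- Y) *m (b *: u)) (a *: u).
Proof.
move=> X0 Y0 u0 hXY hc ca a0 ab a1.
have b1 : 1 <= b.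
  have : b = a^-1 by rewrite -[RHS]mulr1 -ab mulKf ?gt_eqF.
  by move=> ->; rewrite invr_ge1 // ?unitfE ?gt_eqF.
have b0 : 0 <= b by apply: le_trans b1.
have Xu0 : mx_le 0 (X *m u) by exact: mx_ge0_mul.
apply: (@mx_le_trans _ _ _ _ (b *: (u - w))).
  rewrite -hXY scalerBr -scalemxAr mulNmx -scaleNr scaleNr -mulNmx.
  apply: mx_leD; first by rewrite -{1}(scale1r (X *m u)); exact: mx_le_scaler.
  by rewrite mulNmx scalerN; exact: mx_le_refl.
apply: (@mx_le_trans _ _ _ _ (b *: ((a * a) *: u))).
  apply: mx_le_scale => // i j; rewrite ord1 !mxE.
  apply: le_trans (hc i) _; apply: ler_wpM2r => //; exact: mx_ge0E u0.
by rewrite scalerA mulrA [b * a]mulrC ab mul1r; exact: mx_le_refl.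
Qed.

Lemma W12_step n (X Y K L : 'M[R]_n) (x y : 'cV[R]_n) (a : R) :
  mx_le 0 K -> mx_le K X -> mx_le Y L -> mx_le L 0 -> mx_le Y 0 ->
  mx_le 0 x -> mx_le 0 y -> 0 <= a -> a <= 1 ->
  mx_le (X *m x + (- Y) *m y) (a *: x) -> mx_le x (a *: y) ->
  mx_le ((K *m X - L) *m x + (- (K *m Y)) *m y) (a *: x).
Proof.
move=> K0 KX YL L0 Y0 x0 y0 a0 a1 h1 h2.
have -> : (K *m X - L) *m x + (- (K *m Y)) *m y = K *m (X *m x + (- Y) *m y) + (- L) *m x.
  by rewrite mulmxBl mulmxDr !mulNmx mulmxN !mulmxA addrAC.
apply: (@mx_le_trans _ _ _ _ (a *: (K *m x) + (- L) *m x)).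
  apply: mx_leD; last exact: mx_le_refl.
  by rewrite scalemxAr; apply: mx_le_mull.
apply: (@mx_le_trans _ _ _ _ (a *: (X *m x) + (- Y) *m x)).
  apply: mx_leD; first by apply: mx_le_scale => //; exact: mx_le_mulr.
  by apply: mx_le_mulr => //; exact: mx_leN.
apply: (@mx_le_trans _ _ _ _ (a *: (X *m x) + (- Y) *m (a *: y))).
  apply: mx_leD; first exact: mx_le_refl.
  by apply: mx_le_mull => //; exact: mx_ge0_N.
rewrite -scalemxAr -scalerDr.
apply: (@mx_le_trans _ _ _ _ (a *: (a *: x))); first exact: mx_le_scale.
by rewrite scalerA; apply: mx_le_scaler => //; rewrite -[leRHS]mulr1 ler_wpM2l.
Qed.

Lemma supp_block n m (Pd : 'M[R]_(n,m)) (u : 'cV[R]_n) (b : R) : 0 < b ->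
  (forall i j, Pd i j != 0 -> 0 < u i 0) ->
  forall i j, (block_mx Pd 0 0 Pd) i j != 0 -> 0 < (col_mx u (b *: u)) i 0.
Proof.
move=> b0 h i j; case: (split_ordP i) => k ->; case: (split_ordP j) => l ->;
  rewrite ?block_mxEul ?block_mxEur ?block_mxEdl ?block_mxEdr ?col_mxEu ?col_mxEd ?mxE ?eqxx //.
- exact: h.
- by move=> hkl; rewrite mulr_gt0 //; exact: h hkl.
Qed.

End MP.

Section RealFacts.
Variable R : realType.

Lemma alpha_facts (c : R) : 0 <= c -> c < 1 ->
  [/\ 0 < (1 + c) / 2, (1 + c) / 2 < 1 & c <= (1 + c) / 2 * ((1 + c) / 2)].
Proof.
move=> c0 c1; split.
- by rewrite divr_gt0 // ltr_wpDr.
- by rewrite ltr_pdivrMr // mul1r; lra.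
- have -> : (1 + c) / 2 * ((1 + c) / 2) = c + ((1 - c) / 2) ^+ 2.
    by rewrite expr2; field.
  by rewrite lerDl sqr_ge0.
Qed.

Lemma mid_facts (x y : R) : 0 <= x -> x < y -> x < 1 ->
  [/\ x < (x + Num.min y 1) / 2, (x + Num.min y 1) / 2 < y,
      (x + Num.min y 1) / 2 < 1 & 0 <= (x + Num.min y 1) / 2].
Proof.
move=> x0 xy x1.
have m1 : Num.min y 1 <= y by rewrite ge_min lexx.
have m2 : Num.min y 1 <= 1 by rewrite ge_min lexx orbT.
have m3 : x < Num.min y 1 by rewrite lt_min xy x1.
split.
- rewrite ltr_pdivlMr //; lra.
- rewrite ltr_pdivrMr //; lra.
- rewrite ltr_pdivrMr //; lra.
- rewrite divr_ge0 //; lra.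
Qed.

End RealFacts.

Unset Implicit Arguments.

Theorem theorem3p16 (R : realType) (m n : nat)
  (A P1 R1 S1 P2 R2 S2 : 'M[R]_(m, n))
  (Ad P1d P2d : 'M[R]_(n, m)) (Ahatd : 'M[R]_(n, m)) :
  (* Moore-Penrose inverses *)
  is_mpinv A Ad -> is_mpinv P1 P1d -> is_mpinv P2 P2d ->
  (* A semi-monotone *)
  mx_le 0 Ad ->
  (* A = P1 - R1 + S1 : double proper weak regular splitting *)
  A = P1 - R1 + S1 ->
  (forall y, in_range P1 y <-> in_range A y) ->
  (forall x, in_null P1 x <-> in_null A x) ->
  mx_le 0 P1d -> mx_le 0 (P1d *m R1) -> mx_le (P1d *m S1) 0 ->
  (* A = P2 - R2 + S2 : double proper regular splitting *)
  A = P2 - R2 + S2 ->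
  (forall y, in_range P2 y <-> in_range A y) ->
  (forall x, in_null P2 x <-> in_null A x) ->
  mx_le 0 P2d -> mx_le 0 R2 -> mx_le S2 0 ->
  (* N(R2) ⊇ N(P2), R(R2) ⊆ R(P2) *)
  (forall x, in_null P2 x -> in_null R2 x) ->
  (forall y, in_range R2 y -> in_range P2 y) ->
  (* -1 not in the spectrum of R2 P1^† *)
  ~ in_spectrum (R2 *m P1d) (-1) ->
  (* (I + R2 P1^†) A has a nonnegative Moore-Penrose inverse *)
  is_mpinv ((1%:M + R2 *m P1d) *m A) Ahatd -> mx_le 0 Ahatd ->
  mx_le (P2d *m R2) (P1d *m R1) ->
  mx_le (P1d *m S1) (P2d *m S2) ->
  mx_le (P2d *m R2 + P2d *m S2) 0 ->
  let W12 : 'M[R]_(n + n) :=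
    block_mx (P2d *m R2 *m P1d *m R1 - P2d *m S2) (- (P2d *m R2 *m P1d *m S1))
             1%:M 0 in
  let T1 : 'M[R]_(n + n) :=
    block_mx (P1d *m R1) (- (P1d *m S1)) 1%:M 0 in
  spectral_radius W12 <= spectral_radius T1 /\ spectral_radius T1 < 1.
Proof.
move=> hA hP1 hP2 Ad0 eA1 r1 n1 P1d0 X0 Y0 eA2 r2 n2 P2d0 R20 S20 _ _ _ _ _ KX YL _ W12 T1.
have [ea eb ec ed] := mp_derived hA hP1 (mp_ids hA hP1 r1 n1).
move: ea eb ec ed.
set K1 := P1 *m A^T *m Ad^T *m Ad; set K2 := A *m P1^T *m P1d^T *m P1d => ea eb ec ed.
have eT1 : T1 = block_mx (P1d *m R1) (- (P1d *m S1)) 1%:M 0 by [].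
have eW12 : W12 = block_mx ((P2d *m R2) *m (P1d *m R1) - P2d *m S2)
    (- ((P2d *m R2) *m (P1d *m S1))) 1%:M 0 by rewrite /W12 !mulmxA.
move: eT1 eW12; clearbody W12 T1.
move: X0 Y0 KX YL; set X := P1d *m R1; set Y := P1d *m S1 => X0 Y0 KX YL eT1 eW12.
set K := P2d *m R2 in KX eW12; set L := P2d *m S2 in YL eW12.
have K0 : mx_le 0 K by exact: mx_ge0_mul.
have L0 : mx_le L 0.
  have h := mx_le_mull P2d0 S20; rewrite mulmx0 in h; exact: h.
have T10 : mx_le 0 T1.
  rewrite eT1; apply: mx_ge0_block; [exact: X0|exact: mx_ge0_N|exact: mx_ge0_1|exact: mx_le_refl].
have W120 : mx_le 0 W12.
  rewrite eW12; apply: mx_ge0_block.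
  - by have := mx_leD (mx_ge0_mul K0 X0) (mx_ge0_N L0); rewrite addr0.
  - by rewrite -mulmxN; apply: mx_ge0_mul => //; exact: mx_ge0_N.
  - exact: mx_ge0_1.
  - exact: mx_le_refl.
pose u : 'cV[R]_n := Ad *m const_mx 1.
pose w : 'cV[R]_n := P1d *m const_mx 1.
have one0 : mx_le 0 (const_mx 1 : 'cV[R]_m) by move=> i j; rewrite !mxE ler01.
have u0 : mx_le 0 u by exact: mx_ge0_mul.
have u0' : forall i, 0 <= u i 0 by move=> i; exact: mx_ge0E u0.
have hRS : R1 - S1 = P1 - A.
  by rewrite eA1 opprD opprB addrA addrCA subrr addr0.
have hXY : X *m u - Y *m u = u - w.
  by rewrite -mulmxBl /X /Y -mulmxBr hRS mulmxBr mulmxBl /u /w !mulmxA ec ed.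
have uw : forall i, 0 < u i 0 -> 0 < w i 0.
  move=> i /sum_pos_entry [j]; rewrite ea => hj; exact: entry_pos P1d0 hj.
have wu : forall i j, P1d i j != 0 -> 0 < u i 0.
  move=> i j; rewrite eb => h; exact: entry_pos Ad0 h.
pose c := \big[Num.max/0]_i ((u i 0 - w i 0) / u i 0).
have c0 : 0 <= c by apply: bigmax_ge_id.
have c1 : c < 1.
  apply: bigmax_lt => // i _.
  have [->|ui] := eqVneq (u i 0) 0; first by rewrite invr0 mulr0 ltr01.
  have up : 0 < u i 0 by rewrite lt_def ui u0'.
  rewrite ltr_pdivrMr // mul1r ltrBlDr ltrDl; exact: uw.
have hc : forall i, u i 0 - w i 0 <= c * u i 0.
  move=> i; have [e|ui] := eqVneq (u i 0) 0.
    rewrite e mulr0 sub0r oppr_le0.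
    have h := mx_ge0_mul P1d0 one0 i 0; rewrite [X in X <= _]mxE in h; exact: h.
  have up : 0 < u i 0 by rewrite lt_def ui u0'.
  rewrite -ler_pdivrMr //.
  exact: (@le_bigmax _ _ _ 0 (fun i => (u i 0 - w i 0) / u i 0) i).
have [a0 a1 ca] := alpha_facts c0 c1.
move: a0 a1 ca; set a := (1 + c) / 2 => a0 a1 ca.
pose b := a^-1.
have ab : a * b = 1 by rewrite /b divff // gt_eqF.
have b0 : 0 < b by rewrite /b invr_gt0.
pose v := col_mx u (b *: u).
have hT1v : mx_le (T1 *m v) (a *: v).
  rewrite eT1 /v mul_block_col scale_col_mx mul1mx mul0mx addr0; apply: mx_le_col.
  - exact: T1_step X0 Y0 u0 hXY hc ca a0 ab (ltW a1).
  - rewrite scalerA ab scale1r; exact: mx_le_refl.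
have v0 : mx_le 0 v.
  by apply: mx_ge0_col => //; rewrite -(scaler0 _ b); apply: mx_le_scale => //; exact: ltW.
have hDF : T1 *m T1 = block_mx P1d 0 0 P1d *m block_mx (R1 *m X - S1) (- (R1 *m Y)) R1 (- S1).
  rewrite eT1 !mulmx_block; congr block_mx.
  - by rewrite /X /Y mul0mx addr0 mulmx1 mulmxBr !mulmxA.
  - by rewrite /X /Y mulmx0 addr0 mul0mx addr0 !mulmxN !mulmxA.
  - by rewrite mul1mx !mul0mx add0r addr0.
  - by rewrite mul1mx !mul0mx add0r addr0 mulmxN.
have rT1 : spectral_radius T1 <= a.
  apply: (UB T10 v0 (ltW a0) hT1v hDF); exact: supp_block b0 wu.
have rT1lt : spectral_radius T1 < 1 := le_lt_trans rT1 a1.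
split => //.
rewrite leNgt; apply/negP => hlt.
have [f1 f2 f3 f4] := mid_facts (spec_radius_ge0 T1) hlt rT1lt.
move: f1 f2 f3 f4; set t := (_ + _) / 2 => f1 f2 f3 f4.
have H : forall s, t <= s -> s%:M - T1 \in unitmx.
  move=> s ts; apply/negPn/negP => hn.
  have := spec_ge (le_trans f4 ts) hn => hs.
  by move: (lt_le_trans f1 (le_trans ts hs)); rewrite ltxx.
have [v' [vp Tv]] := resolvent_pos T10 H.
have hTv : mx_le (T1 *m v') (t *: v').
  by move=> i j; rewrite ord1 [X in _ <= X]mxE; exact: ltW (Tv i).
have v'0 : mx_le 0 v' by move=> i j; rewrite ord1 mxE; exact: ltW (vp i).
move: hTv v'0; rewrite -(vsubmxK v').
set x := usubmx v'; set y := dsubmx v' => hTv v'0.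
move: hTv; rewrite eT1 mul_block_col scale_col_mx mul1mx mul0mx addr0 => /mx_le_colE [h1 h2].
have [x0 y0] : mx_le 0 x /\ mx_le 0 y by apply: mx_le_colE; rewrite col_mx0.
have hWv : mx_le (W12 *m col_mx x y) (t *: col_mx x y).
  rewrite eW12 mul_block_col scale_col_mx mul1mx mul0mx addr0; apply: mx_le_col => //.
  exact: W12_step K0 KX YL L0 Y0 x0 y0 f4 (ltW f3) h1 h2.
have rW : spectral_radius W12 <= t.
  apply: (@UB _ _ _ W12 (col_mx x y) t 1%:M (W12 *m W12) W120 v'0 f4 hWv).
    by rewrite mul1mx.
  move=> i j _; rewrite vsubmxK; exact: vp.
by move: (lt_le_trans f2 rW); rewrite ltxx.
Qed.
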